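(* Let $A\in\mathbb{C}^{m\times m}$ be diagonalizable with spectral decomposition $A=\sum_j a_jP_j$ (distinct eigenvalues, spectral projections $P_iP_j=\delta_{ij}P_i$, $\sum_jP_j=I_m$), and suppose $e^A$ has a period $k$, i.e. $k$ is the smallest positive integer with $(e^A)^k=I_m$. Let $n$ be a positive integer, written $n=kn_q+r$ with quotient $n_q$ and remainder $0\le r<k$. Then, for $B\in\mathbb{C}^{m\times m}$ with $A+B$ diagonalizable, as $B\to0$, $$\left[e^{A+B}\right]^n=e^{\,rA+r\cdot\mathrm{sspc}_A(B)+n\cdot\mathrm{ssp}_A(B)}+O(\|B\|^2).$$
   Context: $\|\cdot\|$ is the Frobenius norm. $\mathrm{ssp}_A(B):=\sum_jP_jBP_j$ and $\mathrm{sspc}_A(B):=\sum_{j\neq k}P_jBP_k$, where $P_j$ are the spectral projections of $A$. ''$=\ldots+O(\|B\|^2)$'' means there exist $c,\delta>0$ (depending on $A$ and $n$) such that the norm of the difference is at most $c\|B\|^2$ whenever $\|B\|\le\delta$ and $A+B$ is diagonalizable. *)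

(* Defs.v *)
(* complex numbers are R[i] (mathcomp-real-closed) over an
   arbitrary R : realType (MathComp-Analysis), so that C = R[i] is complete. *)
From HB Require Import structures.
From mathcomp Require Import all_boot all_order all_algebra.
From mathcomp Require Import boolp classical_sets reals.
From mathcomp Require Import complex.
Set Implicit Arguments. Unset Strict Implicit. Unset Printing Implicit Defensive.
Import Order.TTheory GRing.Theory Num.Theory.
Local Open Scope ring_scope.

Section Defs.
Variable R : realType.
Variable m : nat.
Local Notation C := (R[i]).
Local Notation M := ('M[C]_m).

Definition frob (A : M) : R :=
  Num.sqrt (\sum_(i < m) \sum_(j < m)
              (complex.Re (A i j) ^+ 2 + complex.Im (A i j) ^+ 2)).

Definition expm_partial (A : M) (N : nat) : M :=
  \sum_(k < N) (k`!%:R)^-1 *: A ^+ k.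

Definition is_expm (A E : M) : Prop :=
  forall eps : R, 0 < eps ->
    exists N : nat, forall N', (N <= N')%N -> frob (E - expm_partial A N') < eps.

(* Matrix exponential: the limit of the exponential series
   (which always exists; chosen classically). *)
Definition expm (A : M) : M := xget 0 (is_expm A).

Definition ssp (s : nat) (P : 'I_s -> M) (B : M) : M :=
  \sum_(j < s) P j * B * P j.

Definition sspc (s : nat) (P : 'I_s -> M) (B : M) : M :=
  \sum_(j < s) \sum_(k < s | k != j) P j * B * P k.

End Defs.

(* Main.v *)
Require Import Defs.
From HB Require Import structures.
From mathcomp Require Import all_boot all_order all_algebra.
From mathcomp Require Import boolp classical_sets reals.
From mathcomp Require Import complex.
From mathcomp Require Import topology normedtype sequences exp.
From mathcomp Require Import ring lra.
Import Order.TTheory GRing.Theory Num.Theory.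
Import numFieldNormedType.Exports.
Local Open Scope ring_scope.
Section Norm.
Set Implicit Arguments.
Unset Strict Implicit.
Variable R : realType.
Variable m : nat.
Local Notation C := (R[i]).
Local Notation M := ('M[C]_m).
Local Notation nc := (@Normc.normc R).
Implicit Types (X Y Z : M).

Lemma nc_ge0 (x : C) : 0 <= nc x.
Proof. by case: x => a b /=; apply: sqrtr_ge0. Qed.

Lemma nc_sqr (x : C) : nc x ^+ 2 = complex.Re x ^+ 2 + complex.Im x ^+ 2.
Proof. by case: x => a b /=; rewrite sqr_sqrtr // addr_ge0 ?sqr_ge0. Qed.

Lemma nc_D (x y : C) : nc (x + y) <= nc x + nc y.
Proof. exact: le_normcD. Qed.

Lemma nc_M (x y : C) : nc (x * y) = nc x * nc y.
Proof. exact: Normc.normcM. Qed.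

Lemma nc_N (x : C) : nc (- x) = nc x.
Proof. exact: normcN. Qed.

Lemma nc0 : nc 0 = 0. Proof. exact: Normc.normc0. Qed.
Lemma nc1 : nc 1 = 1. Proof. exact: Normc.normc1. Qed.

Lemma nc_nat (k : nat) : nc (k%:R) = k%:R.
Proof. by rewrite -[k%:R]/((1 : C) *+ k) normcMn nc1. Qed.

Lemma nc_V (x : C) : nc x^-1 = (nc x)^-1.
Proof. exact: Normc.normcV. Qed.

Lemma nc_Re (x : C) : `|complex.Re x| <= nc x.
Proof.
case: x => a b /=; rewrite -sqrtr_sqr ler_sqrt ?addr_ge0 ?sqr_ge0 //.
by rewrite lerDl sqr_ge0.
Qed.

Lemma nc_Im (x : C) : `|complex.Im x| <= nc x.
Proof.
case: x => a b /=; rewrite -sqrtr_sqr ler_sqrt ?addr_ge0 ?sqr_ge0 //.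
by rewrite lerDr sqr_ge0.
Qed.

Lemma nc_le_ReIm (a b : R) : nc (a +i* b)%C <= `|a| + `|b|.
Proof.
have h : a ^+ 2 + b ^+ 2 <= (`|a| + `|b|) ^+ 2.
  rewrite sqrrD (real_normK (num_real a)) (real_normK (num_real b)).
  rewrite -addrA lerD2l lerDr.
  by rewrite mulrn_wge0 // mulr_ge0.
have e : nc (a +i* b)%C = Num.sqrt (a ^+ 2 + b ^+ 2) by [].
rewrite e; apply: le_trans (_ : _ <= Num.sqrt ((`|a| + `|b|) ^+ 2)) _.
  by rewrite ler_sqrt // sqr_ge0.
by rewrite sqrtr_sqr ger0_norm // addr_ge0.
Qed.

Definition nm (X : M) : R := \sum_i \sum_j nc (X i j).

Lemma nm_ge0 X : 0 <= nm X.
Proof. by apply: sumr_ge0 => i _; apply: sumr_ge0 => j _; apply: nc_ge0. Qed.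

Lemma nmD X Y : nm (X + Y) <= nm X + nm Y.
Proof.
rewrite /nm -big_split /=; apply: ler_sum => i _.
rewrite -big_split /=; apply: ler_sum => j _; rewrite mxE; exact: nc_D.
Qed.

Lemma nmN X : nm (- X) = nm X.
Proof. by apply: eq_bigr => i _; apply: eq_bigr => j _; rewrite mxE nc_N. Qed.

Lemma nmB X Y : nm (X - Y) = nm (Y - X).
Proof. by rewrite -nmN opprB. Qed.

Lemma nmZ c X : nm (c *: X) = nc c * nm X.
Proof.
rewrite /nm mulr_sumr; apply: eq_bigr => i _; rewrite mulr_sumr.
by apply: eq_bigr => j _; rewrite mxE nc_M.
Qed.

Lemma nm0 : nm 0 = 0.
Proof. by rewrite /nm big1 // => i _; rewrite big1 // => j _; rewrite mxE nc0. Qed.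

Lemma nm_sum (I : Type) (r : seq I) (Pr : pred I) (F : I -> M) :
  nm (\sum_(i <- r | Pr i) F i) <= \sum_(i <- r | Pr i) nm (F i).
Proof.
elim/big_rec2: _ => [|i y1 y2 _ H]; first by rewrite nm0.
by apply: le_trans (nmD _ _) _; rewrite lerD2l.
Qed.

Lemma le_sum_one (I : finType) (F : I -> R) (i0 : I) :
  (forall i, 0 <= F i) -> F i0 <= \sum_i F i.
Proof.
move=> H; rewrite (bigD1 i0) //= lerDl; apply: sumr_ge0 => i _; exact: H.
Qed.

Lemma nm_entry X i j : nc (X i j) <= nm X.
Proof.
have h2 := @le_sum_one _ (fun j => nc (X i j)) j (fun _ => nc_ge0 _).
have h1 := @le_sum_one _ (fun i => \sum_j nc (X i j)) i.
apply: le_trans h2 _. apply: h1 => i'.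
by apply: sumr_ge0 => ? _; apply: nc_ge0.
Qed.

Lemma nc_sum (I : Type) (r : seq I) (Pr : pred I) (F : I -> C) :
  nc (\sum_(i <- r | Pr i) F i) <= \sum_(i <- r | Pr i) nc (F i).
Proof.
elim/big_rec2: _ => [|i y1 y2 _ H]; first by rewrite nc0.
by apply: le_trans (nc_D _ _) _; rewrite lerD2l.
Qed.

Lemma nm_row_le X k : \sum_j nc (X k j) <= nm X.
Proof.
apply: (@le_sum_one _ (fun i => \sum_j nc (X i j)) k) => i'.
by apply: sumr_ge0 => ? _; apply: nc_ge0.
Qed.

Lemma nmM X Y : nm (X * Y) <= nm X * nm Y.
Proof.
have e1 : nm (X * Y) <= \sum_i \sum_k nc (X i k) * \sum_j nc (Y k j).
  apply: ler_sum => i _.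
  under [X in _ <= X]eq_bigr => k _ do rewrite mulr_sumr.
  rewrite exchange_big /=; apply: ler_sum => j _.
  rewrite [X * Y]/(X *m Y) mxE; apply: le_trans (nc_sum _ _ _) _.
  by apply: ler_sum => k _; rewrite nc_M.
apply: le_trans e1 _; rewrite /nm mulr_suml; apply: ler_sum => i _.
rewrite mulr_suml; apply: ler_sum => k _.
by apply: ler_wpM2l; [apply: nc_ge0 | apply: nm_row_le].
Qed.

Lemma nm1 : nm (1 : M) = m%:R.
Proof.
rewrite /nm (eq_bigr (fun _ => 1)); last first.
  move=> i _; rewrite (bigD1 i) //= big1 ?addr0; first by rewrite mxE eqxx nc1.
  by move=> j /negbTE ji; rewrite mxE eq_sym ji nc0.
by rewrite sumr_const card_ord.
Qed.

Definition K0 : R := m%:R + 1.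

Lemma K0_ge1 : 1 <= K0.
Proof. by rewrite /K0 lerDr. Qed.

Lemma K0_gt0 : 0 < K0.
Proof. exact: lt_le_trans ltr01 K0_ge1. Qed.

Lemma nmX X p : nm (X ^+ p) <= K0 * nm X ^+ p.
Proof.
case: p => [|p]; first by rewrite !expr0 nm1 mulr1 /K0 lerDl.
have h : nm (X ^+ p.+1) <= nm X ^+ p.+1.
  elim: p => [|p IH]; first by rewrite !expr1.
  rewrite exprS [in X in _ <= X]exprS; apply: le_trans (nmM _ _) _.
  by apply: ler_wpM2l; [apply: nm_ge0 | apply: IH].
apply: le_trans h _; rewrite ler_peMl ?K0_ge1 //; apply: exprn_ge0; exact: nm_ge0.
Qed.

Lemma nm_eq0 X : (forall eps : R, 0 < eps -> nm X <= eps) -> X = 0.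
Proof.
move=> H; apply/matrixP => i j; rewrite mxE.
have h : nc (X i j) = 0.
  apply/eqP; rewrite eq_le nc_ge0 andbT; apply/ler_addgt0Pr => e e0; rewrite add0r.
  exact: le_trans (nm_entry _ _ _) (H _ e0).
exact: Normc.eq0_normc h.
Qed.

Lemma frob_le_nm X : frob X <= nm X.
Proof.
rewrite /frob -(ger0_norm (nm_ge0 X)) -sqrtr_sqr ler_sqrt ?sqr_ge0 //.
rewrite expr2 {2}/nm mulr_sumr; apply: ler_sum => i _.
rewrite mulr_sumr; apply: ler_sum => j _.
rewrite -nc_sqr expr2 mulrC; apply: ler_wpM2r; first exact: nc_ge0.
exact: nm_entry.
Qed.

Lemma nc_le_frob X i j : nc (X i j) <= frob X.
Proof.
rewrite /frob -(ger0_norm (nc_ge0 (X i j))) -sqrtr_sqr ler_sqrt; last first.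
  by apply: sumr_ge0 => ? _; apply: sumr_ge0 => ? _; apply: addr_ge0; apply: sqr_ge0.
rewrite nc_sqr.
have := @le_sum_one _ (fun j => complex.Re (X i j) ^+ 2 + complex.Im (X i j) ^+ 2) j.
move=> /(_ (fun _ => addr_ge0 (sqr_ge0 _) (sqr_ge0 _))) h.
apply: le_trans h _.
apply: (@le_sum_one _ (fun i => \sum_j (complex.Re (X i j) ^+ 2 + complex.Im (X i j) ^+ 2)) i).
by move=> ?; apply: sumr_ge0 => ? _; apply: addr_ge0; apply: sqr_ge0.
Qed.

Lemma nm_le_frob X : nm X <= (m * m)%:R * frob X.
Proof.
apply: le_trans (_ : _ <= \sum_(i < m) \sum_(j < m) frob X) _.
  by apply: ler_sum => i _; apply: ler_sum => j _; apply: nc_le_frob.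
by rewrite !sumr_const !card_ord -mulrnA mulr_natl.
Qed.

End Norm.
Section Scalar.
Variable R : realType.
Implicit Types x : R.

Definition es (x : R) (N : nat) : R := \sum_(k < N) (k`!%:R)^-1 * x ^+ k.

Lemma es_series x N : es x N = series (exp_coeff x) N.
Proof.
rewrite /es /series /= big_mkord; apply: eq_bigr => k _.
by rewrite /exp_coeff /= mulrC.
Qed.

Lemma es_term_ge0 x k : 0 <= x -> 0 <= (k`!%:R)^-1 * x ^+ k.
Proof. by move=> x0; rewrite mulr_ge0 ?invr_ge0 ?ler0n ?exprn_ge0. Qed.

Lemma es_ge0 x N : 0 <= x -> 0 <= es x N.
Proof. by move=> x0; apply: sumr_ge0 => k _; apply: es_term_ge0. Qed.

Lemma es_mono x N N' : 0 <= x -> (N <= N')%N -> es x N <= es x N'.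
Proof.
move=> x0 NN'; rewrite !es_series.
by apply: (@nondecreasing_series R (exp_coeff x) xpredT 0%N) => // n _ _; exact: exp_coeff_ge0.
Qed.

Lemma es_le_exp x N : 0 <= x -> es x N <= expR x.
Proof.
move=> x0; rewrite es_series /expR.
apply: nondecreasing_cvgn_le; last exact: is_cvg_series_exp_coeff.
by move=> a b ab; apply: (@nondecreasing_series R (exp_coeff x) xpredT 0%N) => // n _ _; exact: exp_coeff_ge0.
Qed.

Lemma es_cvg x : 0 <= x -> forall eps : R, 0 < eps ->
  exists N0, forall N, (N0 <= N)%N -> expR x - es x N < eps.
Proof.
move=> x0 eps eps0.
have := is_cvg_series_exp_coeff x; move/cvgrPdist_lt => /(_ eps eps0) [N0 _ HN].
exists N0 => N hN; have := HN N hN; rewrite /= -es_series /expR.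
by apply: le_lt_trans; apply: ler_norm.
Qed.

Lemma real_complete (u : nat -> R) :
  (forall eps : R, 0 < eps -> exists N, forall p q, (N <= p)%N -> (N <= q)%N -> `|u p - u q| < eps) ->
  exists l : R, forall eps : R, 0 < eps -> exists N, forall p, (N <= p)%N -> `|l - u p| < eps.
Proof.
move=> H.
have : cvgn u.
  apply/cauchy_cvgP/cauchy_ballP => e e0.
  have [N HN] := H e e0.
  rewrite near_simpl.
  exists ([set n | (N <= n)%N]%classic, [set n | (N <= n)%N]%classic).
    by split; exists N.
  move=> [p q] [/= hp hq]. rewrite /ball /=. by rewrite distrC; apply: HN.
move=> cu; exists (limn u) => eps eps0.
have := cu; move/cvgrPdist_lt => /(_ eps eps0) [N _ HN].
by exists N => p hp; apply: HN.
Qed.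

End Scalar.
Section CauchyId.
Variable T : pzRingType.
Variables (x y : T) (cf : nat -> T).
Hypothesis cxy : GRing.comm x y.
Hypothesis ccf : forall k z, GRing.comm (cf k) z.
Hypothesis hbin : forall n i, (i <= n)%N -> cf n *+ 'C(n, i) = cf i * cf (n - i).
Let g i j := (cf i * x ^+ i) * (cf j * y ^+ j).

Lemma binom_term n : cf n * (x + y) ^+ n = \sum_(0 <= i < n.+1) g i (n - i).
Proof.
rewrite addrC exprDn_comm; last exact: commr_sym.
rewrite mulr_sumr big_mkord; apply: eq_bigr => [[i hi]] _ /=.
have hin : (i <= n)%N by [].
rewrite /g mulrnAr -mulrnAl hbin //.
have cYX : y ^+ (n - i) * x ^+ i = x ^+ i * y ^+ (n - i).
  exact: (commrX i (commr_sym (commrX (n - i) cxy))).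
rewrite cYX !mulrA -[cf i * cf (n - i) * x ^+ i]mulrA (ccf (n - i) (x ^+ i)) mulrA.
by [].
Qed.

Lemma cauchy_sum N : \sum_(0 <= k < N) cf k * (x + y) ^+ k =
  \sum_(0 <= i < N) \sum_(0 <= j < N - i) g i j.
Proof.
elim: N => [|N IH]; first by rewrite !big_geq.
rewrite big_nat_recr //= IH binom_term.
rewrite [in RHS](@eq_big_nat _ _ _ 0 N.+1 _ (fun i => \sum_(0 <= j < N - i) g i j + g i (N - i))); last first.
  by move=> i /andP[_ hi]; rewrite subSn // big_nat_recr //. 
by rewrite big_split /= [X in _ = X + _]big_nat_recr //= subnn [X in _ = _ + X + _]big_geq // addr0.
Qed.

Lemma addKr2 (V : zmodType) (a b : V) : a + b - a = b.
Proof. by rewrite addrC addKr. Qed.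

Lemma cauchy_prod N :
  (\sum_(0 <= i < N) cf i * x ^+ i) * (\sum_(0 <= j < N) cf j * y ^+ j)
  - \sum_(0 <= k < N) cf k * (x + y) ^+ k
  = \sum_(0 <= i < N) \sum_(N - i <= j < N) g i j.
Proof.
rewrite cauchy_sum big_distrl /= -sumrB; apply: eq_big_nat => i hi.
by rewrite big_distrr /= (big_cat_nat (leq0n (N - i)) (leq_subr i N)) /= addKr2.
Qed.

End CauchyId.

Lemma binc (F : numFieldType) n i : (i <= n)%N ->
  (n`!%:R)^-1 *+ 'C(n, i) = (i`!%:R)^-1 * ((n - i)`!%:R)^-1 :> F.
Proof.
move=> hi; rewrite -(bin_fact hi) !natrM.
have h1 : ('C(n, i)%:R != 0 :> F) by rewrite pnatr_eq0 -lt0n bin_gt0.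
have h2 : (i`!%:R != 0 :> F) by rewrite pnatr_eq0 -lt0n fact_gt0.
have h3 : ((n - i)`!%:R != 0 :> F) by rewrite pnatr_eq0 -lt0n fact_gt0.
by rewrite !invfM -mulrnAl -mulr_natr mulVf // mul1r.
Qed.
Section Expm.
Set Implicit Arguments.
Unset Strict Implicit.
Variable R : realType.
Variable m : nat.
Local Notation C := (R[i]).
Local Notation M := ('M[C]_m).
Local Notation nc := (@Normc.normc R).
Local Notation nm := (@nm R m).
Local Notation K0 := (@K0 R m).
Implicit Types (X Y Z U V : M).

Lemma small_mul (c e : R) : 0 <= c -> 0 < e -> c * (e / (c + 1)) < e.
Proof. move=> c0 e0. rewrite mulrA ltr_pdivrMr; last by lra. nra. Qed.

Lemma small_pos (c e : R) : 0 <= c -> 0 < e -> 0 < e / (c + 1).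
Proof. by move=> c0 e0; rewrite divr_gt0 //; lra. Qed.

Lemma nm_powB U V (rho d : R) p : nm U <= rho -> nm V <= rho -> nm (U - V) <= d ->
  nm (U ^+ p.+1 - V ^+ p.+1) <= p.+1%:R * K0 * rho ^+ p * d.
Proof.
move=> hU hV hd.
have r0 : 0 <= rho by apply: le_trans (nm_ge0 _) hU.
have d0 : 0 <= d by apply: le_trans (nm_ge0 _) hd.
have K1 := K0_ge1 R m.
elim: p => [|p IH].
  rewrite !expr1 expr0 mulr1 mul1r; apply: le_trans hd _.
  by rewrite ler_peMl.
have e : U ^+ p.+2 - V ^+ p.+2 = U * (U ^+ p.+1 - V ^+ p.+1) + (U - V) * V ^+ p.+1.
  by rewrite mulrBr mulrBl addrA subrK -!exprS.
rewrite e; apply: le_trans (nmD _ _) _.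
have h1 : nm (U * (U ^+ p.+1 - V ^+ p.+1)) <= rho * (p.+1%:R * K0 * rho ^+ p * d).
  apply: le_trans (nmM _ _) _; apply: ler_pM => //; exact: nm_ge0.
have hVp : nm (V ^+ p.+1) <= K0 * rho ^+ p.+1.
  apply: le_trans (nmX _ _) _; apply: ler_wpM2l; first by lra.
  by apply: lerXn2r; rewrite // nnegrE nm_ge0.
have h2 : nm ((U - V) * V ^+ p.+1) <= d * (K0 * rho ^+ p.+1).
  apply: le_trans (nmM _ _) _; apply: ler_pM => //; exact: nm_ge0.
apply: le_trans (lerD h1 h2) _.
by rewrite le_eqVlt; apply/orP; left; apply/eqP; rewrite !exprS; ring.
Qed.

Local Notation PS := (@expm_partial R m).

Lemma PS_nat X N : PS X N = \sum_(0 <= k < N) (k`!%:R)^-1 *: X ^+ k.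
Proof. by rewrite /expm_partial big_mkord. Qed.

Lemma es_nat (x : R) N : es x N = \sum_(0 <= k < N) (k`!%:R)^-1 * x ^+ k.
Proof. by rewrite /es big_mkord. Qed.

Lemma nc_invfact k : nc ((k`!%:R)^-1) = (k`!%:R)^-1.
Proof. by rewrite nc_V nc_nat. Qed.

Lemma nm_term X k : nm ((k`!%:R)^-1 *: X ^+ k) <= K0 * ((k`!%:R)^-1 * nm X ^+ k).
Proof.
rewrite nmZ nc_invfact mulrCA; apply: ler_wpM2l; first by rewrite invr_ge0 ler0n.
exact: nmX.
Qed.

Lemma addKr' (V : zmodType) (x y : V) : x + y - x = y.
Proof. by rewrite addrC addKr. Qed.

Lemma PS_diff X N N' : (N <= N')%N ->
  nm (PS X N' - PS X N) <= K0 * (es (nm X) N' - es (nm X) N).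
Proof.
move=> NN'; rewrite !PS_nat !es_nat.
rewrite (big_cat_nat (leq0n N) NN') [X in _ * (X - _)](big_cat_nat (leq0n N) NN') /=.
rewrite !addKr' mulr_sumr; apply: le_trans (nm_sum _ _ _) _.
by apply: ler_sum => k _; apply: nm_term.
Qed.

Lemma nm_PS X N : nm (PS X N) <= K0 * es (nm X) N.
Proof.
have := PS_diff X (leq0n N).
by rewrite /expm_partial /es !big_ord0 !subr0.
Qed.

Lemma PS_cauchy X : forall eps : R, 0 < eps -> exists N0, forall p q,
  (N0 <= p)%N -> (N0 <= q)%N -> nm (PS X p - PS X q) < eps.
Proof.
move=> eps eps0.
have K0p := K0_gt0 R m.
have [N0 HN0] := es_cvg (nm_ge0 X) (divr_gt0 eps0 K0p).
exists N0.
suff H : forall p q, (N0 <= q)%N -> (q <= p)%N -> nm (PS X p - PS X q) < eps.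
  move=> p q hp hq; case: (leqP q p) => hqp; first exact: H.
  by rewrite nmB; apply: H => //; apply: ltnW.
move=> p q hq hqp; apply: le_lt_trans (PS_diff X hqp) _.
rewrite -ltr_pdivlMl // mulrC.
apply: le_lt_trans (HN0 q hq); rewrite lerD2r; exact: es_le_exp (nm_ge0 X).
Qed.


Lemma Re_sub (x y : C) : complex.Re (x - y) = complex.Re x - complex.Re y.
Proof. by case: x; case: y. Qed.
Lemma Im_sub (x y : C) : complex.Im (x - y) = complex.Im x - complex.Im y.
Proof. by case: x; case: y. Qed.

Lemma expm_exists X : exists E, is_expm X E.
Proof.
have Hc := PS_cauchy X.
have Hre : forall i j, exists l : R, forall eps : R, 0 < eps -> exists N, forall p,
    (N <= p)%N -> `|l - complex.Re (PS X p i j)| < eps.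
  move=> i j; apply: real_complete => eps eps0.
  have [N HN] := Hc eps eps0; exists N => p q hp hq.
  rewrite -Re_sub; apply: le_lt_trans (nc_Re _) _.
  have -> : PS X p i j - PS X q i j = (PS X p - PS X q) i j by rewrite !mxE.
  exact: le_lt_trans (nm_entry _ i j) (HN p q hp hq).
have Him : forall i j, exists l : R, forall eps : R, 0 < eps -> exists N, forall p,
    (N <= p)%N -> `|l - complex.Im (PS X p i j)| < eps.
  move=> i j; apply: real_complete => eps eps0.
  have [N HN] := Hc eps eps0; exists N => p q hp hq.
  rewrite -Im_sub; apply: le_lt_trans (nc_Im _) _.
  have -> : PS X p i j - PS X q i j = (PS X p - PS X q) i j by rewrite !mxE.
  exact: le_lt_trans (nm_entry _ i j) (HN p q hp hq).
have [lre Hlre] := fin_all_exists (fun i => fin_all_exists (Hre i)).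
have [lim Hlim] := fin_all_exists (fun i => fin_all_exists (Him i)).
exists (\matrix_(i, j) (lre i j +i* lim i j)%C).
move=> eps eps0.
pose c : R := (m * m)%:R * 2.
have c0 : 0 <= c by rewrite /c mulr_ge0 // ler0n.
pose e' := eps / (c + 1).
have e'0 : 0 < e' := small_pos c0 eps0.
have [Nre HNre] := fin_all_exists (fun i => fin_all_exists (fun j => Hlre i j e' e'0)).
have [Nim HNim] := fin_all_exists (fun i => fin_all_exists (fun j => Hlim i j e' e'0)).
exists (\max_i \max_j (Nre i j + Nim i j))%N => p hp.
apply: le_lt_trans (frob_le_nm _) _.
apply: le_lt_trans (_ : _ <= c * e') (small_mul c0 eps0).
apply: le_trans (_ : _ <= \sum_(i < m) \sum_(j < m) (e' + e')) _.
  apply: ler_sum => i _; apply: ler_sum => j _.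
  have hij : (Nre i j + Nim i j <= p)%N.
    apply: leq_trans hp.
    apply: leq_trans (leq_bigmax (F := fun i => \max_j (Nre i j + Nim i j)%N) i).
    exact: (leq_bigmax (F := fun j => (Nre i j + Nim i j)%N) j).
  rewrite !mxE.
  have -> : (lre i j +i* lim i j)%C - PS X p i j =
      ((lre i j - complex.Re (PS X p i j)) +i* (lim i j - complex.Im (PS X p i j)))%C.
    by case: (PS X p i j).
  apply: le_trans (nc_le_ReIm _ _) _; apply: lerD; apply: ltW.
    by apply: HNre; apply: leq_trans hij; apply: leq_addr.
  by apply: HNim; apply: leq_trans hij; apply: leq_addl.
rewrite !sumr_const !card_ord -mulrnA -mulr_natl /c.
by rewrite le_eqVlt; apply/orP; left; apply/eqP; ring.
Qed.

Lemma expm_spec X : is_expm X (expm X).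
Proof. exact: (xgetPex 0 (expm_exists X)). Qed.

Lemma expm_cvg X eps : 0 < eps ->
  exists N0, forall N, (N0 <= N)%N -> nm (expm X - PS X N) < eps.
Proof.
move=> eps0.
have c0 : 0 <= (m * m)%:R :> R by rewrite ler0n.
have [N0 HN0] := expm_spec X (small_pos c0 eps0).
exists N0 => N hN; apply: le_lt_trans (nm_le_frob _) _.
apply: le_lt_trans (small_mul c0 eps0).
by apply: ler_wpM2l => //; apply: ltW; apply: HN0.
Qed.

Lemma zero_of_small Z : (forall eps : R, 0 < eps -> nm Z <= eps) -> Z = 0.
Proof. exact: nm_eq0. Qed.


Lemma scaleAl' (c : C) X Y : c *: (X * Y) = (c *: X) * Y.
Proof. exact: scalemxAl. Qed.
Lemma scaleAr' (c : C) X Y : c *: (X * Y) = X * (c *: Y).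
Proof. exact: scalemxAr. Qed.

Lemma le_of_lin (x y L : R) : 0 <= L -> (forall e : R, 0 < e -> x <= y + L * e) -> x <= y.
Proof.
move=> L0 H; apply/ler_addgt0Pr => eps eps0.
apply: le_trans (H _ (small_pos L0 eps0)) _.
by rewrite lerD2l; apply: ltW; exact: small_mul.
Qed.

Lemma zero_of_lin (L : R) Z : 0 <= L -> (forall e : R, 0 < e -> nm Z <= L * e) -> Z = 0.
Proof.
move=> L0 H; apply: nm_eq0 => eps eps0.
apply: le_trans (H _ (small_pos L0 eps0)) _.
by apply: ltW; exact: small_mul.
Qed.

Lemma eq_of_lin (L : R) X Y : 0 <= L -> (forall e : R, 0 < e -> nm (X - Y) <= L * e) -> X = Y.
Proof. by move=> L0 H; apply/eqP; rewrite -subr_eq0; apply/eqP; apply: zero_of_lin H. Qed.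

Lemma K0_ge0 : 0 <= K0.
Proof. exact: ltW (K0_gt0 R m). Qed.

Lemma nm_PS_exp X N : nm (PS X N) <= K0 * expR (nm X).
Proof.
apply: le_trans (nm_PS X N) _; apply: ler_wpM2l; first exact: K0_ge0.
exact: es_le_exp (nm_ge0 X).
Qed.

Lemma expm_bound X : nm (expm X) <= K0 * expR (nm X).
Proof.
apply: (@le_of_lin _ _ 1) => // e e0.
have [N HN] := expm_cvg X e0.
rewrite -(subrK (PS X N) (expm X)); apply: le_trans (nmD _ _) _.
rewrite mul1r [_ + e]addrC; apply: lerD; first by apply: ltW; apply: HN.
exact: nm_PS_exp.
Qed.

Lemma pow_intertwine X Y S k : X * S = S * Y -> X ^+ k * S = S * Y ^+ k.
Proof.
move=> H; elim: k => [|k IH]; first by rewrite !expr0 mul1r mulr1.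
by rewrite exprS -mulrA IH mulrA H -mulrA -exprS.
Qed.

Lemma PS_intertwine X Y S N : X * S = S * Y -> PS X N * S = S * PS Y N.
Proof.
move=> H; rewrite /expm_partial mulr_suml mulr_sumr; apply: eq_bigr => k _.
by rewrite -scaleAl' (@pow_intertwine X Y S k H) scaleAr'.
Qed.

Lemma telesc3 (W : zmodType) (a b c d : W) : a - d = (a - b) + (b - c) + (c - d).
Proof. by rewrite !addrA !subrK. Qed.

Lemma telesc4 (W : zmodType) (a b c d f : W) : a - f = (a - b) + (b - c) + (c - d) + (d - f).
Proof. by rewrite !addrA !subrK. Qed.

Lemma expm_intertwine X Y S : X * S = S * Y -> expm X * S = S * expm Y.
Proof.
move=> H; apply: (@eq_of_lin (nm S + nm S)); first by rewrite addr_ge0 ?nm_ge0.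
move=> e e0.
have [N1 H1] := expm_cvg X e0; have [N2 H2] := expm_cvg Y e0.
pose N := maxn N1 N2.
have -> : expm X * S - S * expm Y = (expm X - PS X N) * S + S * (PS Y N - expm Y).
  by rewrite mulrBl mulrBr (@PS_intertwine X Y S N H) addrA subrK.
apply: le_trans (nmD _ _) _; rewrite [(nm S + nm S) * e]mulrDl; apply: lerD.
  apply: le_trans (nmM _ _) _; rewrite [nm S * e]mulrC; apply: ler_wpM2r; first exact: nm_ge0.
  by apply: ltW; apply: H1; exact: leq_maxl.
apply: le_trans (nmM _ _) _; apply: ler_wpM2l; first exact: nm_ge0.
by rewrite nmB; apply: ltW; apply: H2; exact: leq_maxr.
Qed.

Lemma expm0 : expm (0 : M) = 1.
Proof.
apply: (@eq_of_lin 1) => // e e0.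
have [N HN] := expm_cvg (0 : M) e0.
have PS0 : PS 0 N.+1 = 1.
  rewrite PS_nat big_nat_recl // big1 ?addr0; last first.
    by move=> i _; rewrite exprS mul0r scaler0.
  by rewrite expr0 fact0 invr1 scale1r.
by rewrite -PS0 mul1r; apply: ltW; apply: HN.
Qed.

Lemma invfactS (i : nat) :
  ((i.+1)`!%:R)^-1 * (i.+1%:R : R) = (i`!%:R)^-1.
Proof.
have h1 : (i.+1%:R : R) != 0 by rewrite pnatr_eq0.
by rewrite factS natrM invfM mulrAC mulVf // mul1r.
Qed.

Lemma expm_lip U V (rho : R) : nm U <= rho -> nm V <= rho ->
  nm (expm U - expm V) <= K0 * expR rho * nm (U - V).
Proof.
move=> hU hV.
have r0 : 0 <= rho by apply: le_trans (nm_ge0 _) hU.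
pose d := nm (U - V).
have d0 : 0 <= d by apply: nm_ge0.
have PSd : forall N, nm (PS U N.+1 - PS V N.+1) <= K0 * expR rho * d.
  move=> N; rewrite !PS_nat -sumrB big_nat_recl // !expr0 subrr add0r.
  apply: le_trans (nm_sum _ _ _) _.
  apply: le_trans (_ : _ <= \sum_(0 <= i < N) K0 * d * ((i`!%:R)^-1 * rho ^+ i)) _.
    apply: ler_sum => i _; rewrite -scalerBr nmZ nc_invfact.
    apply: le_trans (ler_wpM2l _ (nm_powB i hU hV (lexx d))) _.
      by rewrite invr_ge0 ler0n.
    rewrite -(invfactS i).
    by rewrite le_eqVlt; apply/orP; left; apply/eqP; ring.
  rewrite -mulr_sumr -es_nat mulrAC; apply: ler_wpM2r => //.
  by apply: ler_wpM2l; [exact: K0_ge0 | exact: es_le_exp].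
apply: (@le_of_lin _ _ 2) => // e e0.
have [N1 H1] := expm_cvg U e0; have [N2 H2] := expm_cvg V e0.
pose N := (maxn N1 N2).+1.
rewrite (telesc3 _ (PS U N) (PS V N)).
apply: le_trans (nmD _ _) _; apply: le_trans (lerD (nmD _ _) (lexx _)) _.
have h1 : nm (expm U - PS U N) <= e.
  by apply: ltW; apply: H1; apply: leq_trans (leq_maxl _ _) (leqnSn _).
have h2 : nm (PS V N - expm V) <= e.
  by rewrite nmB; apply: ltW; apply: H2; apply: leq_trans (leq_maxr _ _) (leqnSn _).
have := lerD (lerD h1 (PSd (maxn N1 N2))) h2.
move=> h; apply: le_trans h _.
by rewrite le_eqVlt; apply/orP; left; apply/eqP; rewrite /d; ring.
Qed.
Definition cfM k : M := ((k`!%:R)^-1 : C)%:M.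

Lemma cfM_mul k Z : cfM k * Z = (k`!%:R)^-1 *: Z.
Proof. exact: mul_scalar_mx. Qed.

Lemma PS_cf X N : PS X N = \sum_(0 <= k < N) cfM k * X ^+ k.
Proof. by rewrite PS_nat; apply: eq_bigr => k _; rewrite cfM_mul. Qed.

Lemma cfM_comm k Z : GRing.comm (cfM k) Z.
Proof. exact: (esym (scalar_mxC _ Z)). Qed.

Lemma cfM_bin n i : (i <= n)%N -> cfM n *+ 'C(n, i) = cfM i * cfM (n - i).
Proof. by move=> hi; rewrite /cfM -raddfMn binc //; exact: scalar_mxM. Qed.

Lemma CP_bound X Y N : X * Y = Y * X ->
  nm (PS X N * PS Y N - PS (X + Y) N) <=
  K0 ^+ 2 * (es (nm X) N * es (nm Y) N - es (nm X + nm Y) N).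
Proof.
move=> H.
rewrite !PS_cf (@cauchy_prod _ X Y cfM H cfM_comm cfM_bin N).
rewrite !es_nat (@cauchy_prod R (nm X) (nm Y) (fun k => (k`!%:R)^-1)
  (@mulrC R _ _) (fun k z => mulrC _ _) (@binc R) N).
rewrite mulr_sumr; apply: le_trans (nm_sum _ _ _) _; apply: ler_sum => i _.
rewrite mulr_sumr; apply: le_trans (nm_sum _ _ _) _; apply: ler_sum => j _.
rewrite !cfM_mul; apply: le_trans (nmM _ _) _.
apply: le_trans (ler_pM (nm_ge0 _) (nm_ge0 _) (nm_term X i) (nm_term Y j)) _.
by rewrite le_eqVlt; apply/orP; left; apply/eqP; ring.
Qed.

Lemma expm_add X Y : X * Y = Y * X -> expm (X + Y) = expm X * expm Y.
Proof.
move=> H; symmetry.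
apply: (@eq_of_lin (nm (expm Y) + K0 * expR (nm X) + K0 ^+ 2 + 1)).
  by rewrite !addr_ge0 ?nm_ge0 ?mulr_ge0 ?K0_ge0 ?expR_ge0 ?exprn_ge0 ?K0_ge0.
move=> e e0.
have [N1 H1] := expm_cvg X e0; have [N2 H2] := expm_cvg Y e0.
have [N3 H3] := expm_cvg (X + Y) e0.
have [N4 H4] := es_cvg (addr_ge0 (nm_ge0 X) (nm_ge0 Y)) e0.
pose N := maxn (maxn N1 N2) (maxn N3 N4).
have hN1 : (N1 <= N)%N by rewrite /N !leq_max leqnn ?orbT.
have hN2 : (N2 <= N)%N by rewrite /N !leq_max leqnn ?orbT.
have hN3 : (N3 <= N)%N by rewrite /N !leq_max leqnn ?orbT.
have hN4 : (N4 <= N)%N by rewrite /N !leq_max leqnn ?orbT.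
have -> : expm X * expm Y - expm (X + Y) =
    (expm X - PS X N) * expm Y + PS X N * (expm Y - PS Y N)
    + (PS X N * PS Y N - PS (X + Y) N) + (PS (X + Y) N - expm (X + Y)).
  by rewrite mulrBl mulrBr !addrA !subrK.
apply: le_trans (nmD _ _) _; apply: le_trans (lerD (nmD _ _) (lexx _)) _.
apply: le_trans (lerD (lerD (nmD _ _) (lexx _)) (lexx _)) _.
have b1 : nm ((expm X - PS X N) * expm Y) <= e * nm (expm Y).
  apply: le_trans (nmM _ _) _; apply: ler_wpM2r; first exact: nm_ge0.
  by apply: ltW; apply: H1.
have b2 : nm (PS X N * (expm Y - PS Y N)) <= K0 * expR (nm X) * e.
  apply: le_trans (nmM _ _) _; apply: ler_pM; try exact: nm_ge0.
    exact: nm_PS_exp.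
  by apply: ltW; apply: H2.
have b3 : nm (PS X N * PS Y N - PS (X + Y) N) <= K0 ^+ 2 * e.
  apply: le_trans (CP_bound N H) _; apply: ler_wpM2l.
    by rewrite exprn_ge0 // K0_ge0.
  apply: le_trans (_ : _ <= expR (nm X + nm Y) - es (nm X + nm Y) N) _.
    rewrite lerD2r expRD; apply: ler_pM; rewrite ?es_ge0 ?nm_ge0 //;
    exact: es_le_exp (nm_ge0 _).
  by apply: ltW; apply: H4.
have b4 : nm (PS (X + Y) N - expm (X + Y)) <= e.
  by rewrite nmB; apply: ltW; apply: H3.
apply: le_trans (lerD (lerD (lerD b1 b2) b3) b4) _.
by rewrite le_eqVlt; apply/orP; left; apply/eqP; ring.
Qed.

Lemma expm_nat j X : expm (j%:R *: X) = expm X ^+ j.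
Proof.
elim: j => [|j IH]; first by rewrite scale0r expm0 expr0.
rewrite -natr1 scalerDl scale1r expm_add ?IH ?exprSr //.
by rewrite -scaleAl' -scaleAr'.
Qed.
End Expm.
Section Spectral.
Set Implicit Arguments.
Unset Strict Implicit.
Variable R : realType.
Variables m s : nat.
Local Notation C := (R[i]).
Local Notation M := ('M[C]_m).
Local Notation nc := (@Normc.normc R).
Local Notation nm := (@nm R m).
Local Notation K0 := (@K0 R m).
Variable a : 'I_s -> C.
Variable P : 'I_s -> M.
Hypothesis ha_inj : injective a.
Hypothesis hP_orth : forall i j, P i * P j = (if i == j then P i else 0).
Hypothesis hP_sum : \sum_(j < s) P j = 1.

Definition Am : M := \sum_(j < s) a j *: P j.
Definition Tm (B : M) : M :=
  \sum_(j < s) \sum_(l < s | l != j) (a l - a j)^-1 *: (P j * B * P l).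

Lemma AP j : Am * P j = a j *: P j.
Proof.
rewrite /Am mulr_suml (bigD1 j) //= -scaleAl' hP_orth eqxx big1 ?addr0 //.
by move=> l hl; rewrite -scaleAl' hP_orth (negbTE hl) scaler0.
Qed.

Lemma PA j : P j * Am = a j *: P j.
Proof.
rewrite /Am mulr_sumr (bigD1 j) //= -scaleAr' hP_orth eqxx big1 ?addr0 //.
by move=> l hl; rewrite -scaleAr' hP_orth eq_sym (negbTE hl) scaler0.
Qed.

Lemma AQ j l (B : M) : Am * (P j * B * P l) = a j *: (P j * B * P l).
Proof. by rewrite !mulrA AP -!scaleAl'. Qed.

Lemma QA j l (B : M) : (P j * B * P l) * Am = a l *: (P j * B * P l).
Proof. by rewrite -mulrA PA -scaleAr'. Qed.

Lemma B_decomp (B : M) : B = ssp P B + sspc P B.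
Proof.
have e : B = (\sum_j P j) * B * (\sum_l P l) by rewrite hP_sum mul1r mulr1.
rewrite {1}e !mulr_suml /ssp /sspc -big_split; apply: eq_bigr => j _ /=.
by rewrite mulr_sumr (bigD1 j).
Qed.

Lemma A_ssp (B : M) : Am * ssp P B = ssp P B * Am.
Proof.
rewrite /ssp mulr_sumr mulr_suml; apply: eq_bigr => j _.
by rewrite AQ QA.
Qed.

Lemma comm_T (B : M) : Am * Tm B - Tm B * Am = - sspc P B.
Proof.
rewrite /Tm /sspc mulr_sumr mulr_suml -sumrB -sumrN; apply: eq_bigr => j _.
rewrite mulr_sumr mulr_suml -sumrB -sumrN; apply: eq_bigr => l hl.
rewrite -scaleAr' -scaleAl' AQ QA !scalerA -scalerBl -mulrBr.
have hne : a l - a j != 0.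
  by rewrite subr_eq0; apply: contra hl => /eqP /ha_inj ->.
by rewrite -[a j - a l]opprB mulrN mulVf // scaleN1r.
Qed.

Lemma nmPBP j l (B : M) : nm (P j * B * P l) <= nm (P j) * nm (P l) * nm B.
Proof.
apply: le_trans (nmM _ _) _.
apply: le_trans (ler_wpM2r (nm_ge0 _) (nmM _ _)) _.
by rewrite mulrAC.
Qed.

Lemma ssp_bound : exists2 c : R, 0 <= c & forall B, nm (ssp P B) <= c * nm B.
Proof.
exists (\sum_j nm (P j) * nm (P j)).
  by apply: sumr_ge0 => j _; rewrite mulr_ge0 ?nm_ge0.
move=> B; rewrite mulr_suml; apply: le_trans (nm_sum _ _ _) _.
by apply: ler_sum => j _; exact: nmPBP.
Qed.

Lemma sspc_bound : exists2 c : R, 0 <= c & forall B, nm (sspc P B) <= c * nm B.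
Proof.
exists (\sum_j \sum_(l | l != j) nm (P j) * nm (P l)).
  by apply: sumr_ge0 => j _; apply: sumr_ge0 => l _; rewrite mulr_ge0 ?nm_ge0.
move=> B; rewrite mulr_suml; apply: le_trans (nm_sum _ _ _) _.
apply: ler_sum => j _; rewrite mulr_suml; apply: le_trans (nm_sum _ _ _) _.
by apply: ler_sum => l _; exact: nmPBP.
Qed.

Lemma T_bound : exists2 c : R, 0 <= c & forall B, nm (Tm B) <= c * nm B.
Proof.
exists (\sum_j \sum_(l | l != j) nc ((a l - a j)^-1) * (nm (P j) * nm (P l))).
  apply: sumr_ge0 => j _; apply: sumr_ge0 => l _.
  by rewrite mulr_ge0 ?nc_ge0 ?mulr_ge0 ?nm_ge0.
move=> B; rewrite mulr_suml; apply: le_trans (nm_sum _ _ _) _.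
apply: ler_sum => j _; rewrite mulr_suml; apply: le_trans (nm_sum _ _ _) _.
apply: ler_sum => l _; rewrite nmZ -[_ * _ * nm B]mulrA; apply: ler_wpM2l; first exact: nc_ge0.
exact: nmPBP.
Qed.

End Spectral.
Section Ident.
Variable R : realType.
Variables m s : nat.
Local Notation C := (R[i]).
Local Notation M := ('M[C]_m).
Variable a : 'I_s -> C.
Variable P : 'I_s -> M.
Hypothesis ha_inj : injective a.
Hypothesis hP_orth : forall i j, P i * P j = (if i == j then P i else 0).
Hypothesis hP_sum : \sum_(j < s) P j = 1.

Lemma keyX (Aa AT B BT W TA TW O : M) : AT = TA - O -> B = W + O ->
  Aa + AT + (B + BT) - (Aa + W + (TA + TW)) = BT - TW.
Proof. by move=> -> ->; apply/matrixP => i j; rewrite !mxE; ring. Qed.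

Lemma keyY (Aa AT O OT W WT TA TW : M) (r n : C) : AT = TA - O ->
  r *: Aa + r *: AT + (r *: O + r *: OT) + (n *: W + n *: WT)
  - (r *: Aa + n *: W + (r *: TA + n *: TW)) = r *: OT + n *: (WT - TW).
Proof. by move=> ->; apply/matrixP => i j; rewrite !mxE; ring. Qed.

Lemma AT_eq (B : M) : Am a P * Tm a P B = Tm a P B * Am a P - sspc P B.
Proof.
have := comm_T ha_inj hP_orth B.
by move/(congr1 (fun Q => Q + Tm a P B * Am a P)); rewrite subrK addrC.
Qed.

Lemma X_identity (B : M) :
  (Am a P + B) * (1 + Tm a P B) - (1 + Tm a P B) * (Am a P + ssp P B)
  = B * Tm a P B - Tm a P B * ssp P B.
Proof.
rewrite !mulrDl !mulrDr !mul1r !mulr1.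
by apply: keyX; [apply: AT_eq | apply: B_decomp].
Qed.

Lemma Y_identity (B : M) (r n : C) :
  (r *: Am a P + r *: sspc P B + n *: ssp P B) * (1 + Tm a P B)
  - (1 + Tm a P B) * (r *: Am a P + n *: ssp P B)
  = r *: (sspc P B * Tm a P B) + n *: (ssp P B * Tm a P B - Tm a P B * ssp P B).
Proof.
rewrite !mulrDl !mulrDr !mul1r !mulr1 -!scaleAl' -!scaleAr'.
by apply: keyY; apply: AT_eq.
Qed.

Lemma comm_lin (X Y Q : M) (al be ga : C) : X * Q = Q * X -> Y * Q = Q * Y ->
  (al *: X + be *: Y) * (ga *: Q) = (ga *: Q) * (al *: X + be *: Y).
Proof.
move=> HX HY.
by rewrite mulrDl mulrDr -!scaleAl' -!scaleAr' !scalerA HX HY [al * ga]mulrC [be * ga]mulrC.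
Qed.

End Ident.
Theorem theorem3 (R : realType) (m : nat)
  (A : 'M[R[i]]_m) (s : nat) (a : 'I_s -> R[i]) (P : 'I_s -> 'M[R[i]]_m)
  (* spectral decomposition of the diagonalizable matrix A *)
  (ha_inj : injective a)
  (hP_nz : forall j, P j != 0)
  (hP_orth : forall i j, P i * P j = (if i == j then P i else 0))
  (hP_sum : \sum_(j < s) P j = 1)
  (hA : A = \sum_(j < s) a j *: P j)
  (* e^A has period k *)
  (k : nat) (hk_pos : (0 < k)%N) (hk : expm A ^+ k = 1)
  (hk_min : forall j : nat, (0 < j)%N -> (j < k)%N -> expm A ^+ j != 1)
  (n : nat) (hn : (0 < n)%N) :
  let r := (n %% k)%N in
  exists c : R, exists delta : R, 0 < c /\ 0 < delta /\
    forall B : 'M[R[i]]_m, frob B <= delta -> diagonalizable (A + B) ->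
      frob (expm (A + B) ^+ n
            - expm (r%:R *: A + r%:R *: sspc P B + n%:R *: ssp P B))
      <= c * frob B ^+ 2.
Proof.
have frob_ge0' : forall X : 'M[R[i]]_m, 0 <= frob X by move=> X; exact: sqrtr_ge0.
move=> r.
have hA2 : A = Am a P := hA.
rewrite hA2 in hk *; clear hA hA2 hk_min.
have K0p : 0 < @K0 R m := K0_gt0 R m.
have K1 : 1 <= @K0 R m := K0_ge1 R m.
have K00 : 0 <= @K0 R m by lra.
have [cW cW0 HW] := ssp_bound P.
have [cO cO0 HO] := sspc_bound P.
have [cT cT0 HT] := T_bound a P.
pose NA := nm (Am a P). have eNA : NA = nm (Am a P) by []. clearbody NA.
have NA0 : 0 <= NA by rewrite eNA; exact: nm_ge0.
pose rr : R := r%:R. have err : rr = r%:R by []. clearbody rr.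
pose nn : R := n%:R. have enn : nn = n%:R by []. clearbody nn.
have rr0 : 0 <= rr by rewrite err ler0n.
have nn0 : 0 <= nn by rewrite enn ler0n.
pose beta : R := 1 / (2 * cT + 2). have ebeta : beta = 1 / (2 * cT + 2) by [].
clearbody beta.
have beta0 : 0 < beta by rewrite ebeta divr_gt0 //; lra.
have beta_half : beta <= 2^-1.
  by rewrite ebeta ler_pdivrMr; [lra | lra].
have cTbeta : cT * beta <= 2^-1.
  by rewrite ebeta mulrA mulr1 ler_pdivrMr; [lra | lra].
pose s1 : R := @K0 R m + 1. have es1 : s1 = @K0 R m + 1 by []. clearbody s1.
pose s2 : R := 2 * @K0 R m. have es2 : s2 = 2 * @K0 R m by []. clearbody s2.
pose c1 : R := s2 * (cT * (1 + cW)). have ec1 : c1 = s2 * (cT * (1 + cW)) by [].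
clearbody c1.
pose c2 : R := s2 * (rr * (cO * cT) + nn * (2 * (cW * cT))).
have ec2 : c2 = s2 * (rr * (cO * cT) + nn * (2 * (cW * cT))) by []. clearbody c2.
pose rho1 : R := NA + cW + c1. have erho1 : rho1 = NA + cW + c1 by []. clearbody rho1.
pose rho2 : R := rr * NA + nn * cW + c2.
have erho2 : rho2 = rr * NA + nn * cW + c2 by []. clearbody rho2.
pose E1 : R := @K0 R m * expR rho1. have eE1 : E1 = @K0 R m * expR rho1 by [].
clearbody E1.
pose cD : R := nn * @K0 R m * E1 ^+ n.-1 * (@K0 R m * expR rho1 * c1)
  + @K0 R m * expR rho2 * c2.
have ecD : cD = nn * @K0 R m * E1 ^+ n.-1 * (@K0 R m * expR rho1 * c1)
  + @K0 R m * expR rho2 * c2 by [].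
clearbody cD.
pose Cst : R := s1 * cD * s2. have eCst : Cst = s1 * cD * s2 by []. clearbody Cst.
have s10 : 0 <= s1 by rewrite es1; lra.
have s20 : 0 <= s2 by rewrite es2; lra.
have c10 : 0 <= c1.
  by rewrite ec1; apply: mulr_ge0 s20 (mulr_ge0 cT0 _); lra.
have c20 : 0 <= c2.
  rewrite ec2; apply: mulr_ge0 => //; apply: addr_ge0.
    exact: mulr_ge0 rr0 (mulr_ge0 cO0 cT0).
  by apply: mulr_ge0 nn0 (mulr_ge0 _ (mulr_ge0 cW0 cT0)); lra.
have E10 : 0 <= E1 by rewrite eE1; exact: mulr_ge0 K00 (expR_ge0 _).
have cD0 : 0 <= cD.
  rewrite ecD; apply: addr_ge0.
    apply: mulr_ge0; last exact: mulr_ge0 (mulr_ge0 K00 (expR_ge0 _)) c10.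
    exact: mulr_ge0 (mulr_ge0 nn0 K00) (exprn_ge0 _ E10).
  exact: mulr_ge0 (mulr_ge0 K00 (expR_ge0 _)) c20.
have Cst0 : 0 <= Cst by rewrite eCst !mulr_ge0.
pose mm : R := (m * m)%:R. have emm : mm = (m * m)%:R by []. clearbody mm.
have mm0 : 0 <= mm by rewrite emm ler0n.
exists (Cst * mm ^+ 2 + 1), (beta / (mm + 1)).
split; first by rewrite ltr_pwDr // mulr_ge0 // exprn_ge0.
split; first exact: small_pos.
move=> B hB _.
pose b := nm B. have eb : b = nm B by []. clearbody b.
have b0 : 0 <= b by rewrite eb; exact: nm_ge0.
have hb : b <= beta.
  rewrite eb; apply: le_trans (nm_le_frob B) _. rewrite -emm.
  apply: le_trans (ler_wpM2l mm0 hB) _.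
  by apply: ltW; apply: small_mul.
have hb1 : b <= 1 by lra.
have hb2 : b ^+ 2 <= 1.
  by rewrite expr2; apply: le_trans (ler_wpM2r b0 hb1) _; rewrite mul1r.
pose T := Tm a P B.
pose W := ssp P B.
pose O := sspc P B.
have hTb : nm T <= cT * b by rewrite eb; exact: HT B.
have hWb : nm W <= cW * b by rewrite eb; exact: HW B.
have hOb : nm O <= cO * b by rewrite eb; exact: HO B.
have hT : nm T <= 2^-1.
  by apply: le_trans hTb _; apply: le_trans (ler_wpM2l cT0 hb) cTbeta.
pose S := 1 + T.
have Su : S \in unitmx.
  rewrite -row_free_unit -kermx_eq0; apply/eqP.
  have hK := mulmx_ker S.
  set Kr := kermx S in hK *.
  have h0 : Kr + Kr * T = 0 by rewrite -hK /S mulmxDr mulmx1.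
  have e : Kr = - (Kr * T) by apply/eqP; rewrite -addr_eq0 h0.
  apply: nm_eq0 => eps eps0.
  have : nm Kr <= nm Kr * 2^-1.
    rewrite {1}e nmN; apply: le_trans (nmM _ _) _.
    by apply: ler_wpM2l; [apply: nm_ge0 | exact: hT].
  have := nm_ge0 Kr; lra.
pose Si := invmx S.
have hSSi : S * Si = 1 := mulmxV Su.
have hSiS : Si * S = 1 := mulVmx Su.
have hSi : nm Si <= s2.
  have e : Si = 1 - T * Si.
    by apply/eqP; rewrite eq_sym subr_eq -hSSi /S mulrDl mul1r addrC.
  have h : nm Si <= @K0 R m + nm Si * 2^-1.
    rewrite {1}e; apply: le_trans (nmD _ _) _; rewrite nmN nm1; apply: lerD.
      by rewrite /K0 lerDl.
    apply: le_trans (nmM _ _) _; rewrite mulrC; apply: ler_wpM2l; first exact: nm_ge0.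
    exact: hT.
  by rewrite es2; lra.
have hS : nm S <= s1.
  apply: le_trans (nmD _ _) _; rewrite nm1 es1; apply: lerD.
    by rewrite /K0 lerDl.
  by apply: le_trans hT _; lra.
pose Z := Am a P + W.
pose X1 := Si * (Am a P + B) * S.
have H0 : (Am a P + B) * S = S * X1 by rewrite /X1 !mulrA hSSi mul1r.
have eX1 : X1 - Z = Si * ((Am a P + B) * S - S * Z).
  by rewrite mulrBr !mulrA hSiS mul1r.
have hX1Z : nm (X1 - Z) <= c1 * b ^+ 2.
  rewrite eX1 /S /Z X_identity //.
  apply: le_trans (nmM _ _) _.
  have h : nm (B * T - T * W) <= cT * (1 + cW) * b ^+ 2.
    apply: le_trans (nmD _ _) _; rewrite nmN.
    apply: le_trans (lerD (nmM _ _) (nmM _ _)) _; rewrite -eb.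
    apply: le_trans (lerD (ler_wpM2l b0 hTb) (ler_pM (nm_ge0 _) (nm_ge0 _) hTb hWb)) _.
    by rewrite le_eqVlt; apply/orP; left; apply/eqP; ring.
  apply: le_trans (ler_pM (nm_ge0 _) (nm_ge0 _) hSi h) _.
  by rewrite ec1 le_eqVlt; apply/orP; left; apply/eqP; ring.
pose Y := (r%:R : R[i]) *: Am a P + (r%:R : R[i]) *: O + (n%:R : R[i]) *: W.
pose Z' := (r%:R : R[i]) *: Am a P + (n%:R : R[i]) *: W.
pose Y1 := Si * Y * S.
have H0' : Y * S = S * Y1 by rewrite /Y1 !mulrA hSSi mul1r.
have eY1 : Y1 - Z' = Si * (Y * S - S * Z').
  by rewrite mulrBr !mulrA hSiS mul1r.
have ncr : @Normc.normc R ((r%:R : R[i])) = rr by rewrite nc_nat err.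
have ncn : @Normc.normc R ((n%:R : R[i])) = nn by rewrite nc_nat enn.
have hY1Z : nm (Y1 - Z') <= c2 * b ^+ 2.
  rewrite eY1 /S /Y /Z' Y_identity //.
  apply: le_trans (nmM _ _) _.
  have h : nm ((r%:R : R[i]) *: (O * T) + (n%:R : R[i]) *: (W * T - T * W))
      <= (rr * (cO * cT) + nn * (2 * (cW * cT))) * b ^+ 2.
    apply: le_trans (nmD _ _) _; rewrite !nmZ ncr ncn.
    have h1 : nm (O * T) <= cO * cT * b ^+ 2.
      apply: le_trans (nmM _ _) _.
      apply: le_trans (ler_pM (nm_ge0 _) (nm_ge0 _) hOb hTb) _.
      by rewrite le_eqVlt; apply/orP; left; apply/eqP; ring.
    have h2 : nm (W * T - T * W) <= 2 * (cW * cT) * b ^+ 2.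
      apply: le_trans (nmD _ _) _; rewrite nmN.
      apply: le_trans (lerD (nmM _ _) (nmM _ _)) _.
      apply: le_trans (lerD (ler_pM (nm_ge0 _) (nm_ge0 _) hWb hTb)
                            (ler_pM (nm_ge0 _) (nm_ge0 _) hTb hWb)) _.
      by rewrite le_eqVlt; apply/orP; left; apply/eqP; ring.
    apply: le_trans (lerD (ler_wpM2l rr0 h1) (ler_wpM2l nn0 h2)) _.
    by rewrite le_eqVlt; apply/orP; left; apply/eqP; ring.
  apply: le_trans (ler_pM (nm_ge0 _) (nm_ge0 _) hSi h) _.
  by rewrite ec2 le_eqVlt; apply/orP; left; apply/eqP; ring.
have hcwb : cW * b <= cW by rewrite -[X in _ <= X]mulr1; apply: ler_wpM2l.
have hc1b : c1 * b ^+ 2 <= c1 by rewrite -[X in _ <= X]mulr1; apply: ler_wpM2l.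
have hc2b : c2 * b ^+ 2 <= c2 by rewrite -[X in _ <= X]mulr1; apply: ler_wpM2l.
have hZ0 : nm Z <= NA + cW.
  apply: le_trans (nmD _ _) _; rewrite -eNA lerD2l; exact: le_trans hWb hcwb.
have hZ : nm Z <= rho1 by rewrite erho1 -[X in X <= _]addr0 lerD.
have hX1 : nm X1 <= rho1.
  have -> : X1 = Z + (X1 - Z) by rewrite addrC subrK.
  apply: le_trans (nmD _ _) _; rewrite erho1; apply: lerD => //.
  exact: le_trans hX1Z hc1b.
have hZ'0 : nm Z' <= rr * NA + nn * cW.
  apply: le_trans (nmD _ _) _; rewrite !nmZ ncr ncn -eNA; apply: lerD => //.
  by apply: ler_wpM2l => //; apply: le_trans hWb hcwb.
have hZ' : nm Z' <= rho2 by rewrite erho2 -[X in X <= _]addr0 lerD.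
have hY1 : nm Y1 <= rho2.
  have -> : Y1 = Z' + (Y1 - Z') by rewrite addrC subrK.
  apply: le_trans (nmD _ _) _; rewrite erho2; apply: lerD => //.
  exact: le_trans hY1Z hc2b.
have hEX1 : nm (expm X1) <= E1.
  apply: le_trans (expm_bound X1) _; rewrite eE1; apply: ler_wpM2l => //.
  by rewrite ler_expR.
have hEZ : nm (expm Z) <= E1.
  apply: le_trans (expm_bound Z) _; rewrite eE1; apply: ler_wpM2l => //.
  by rewrite ler_expR.
have hd1 : nm (expm X1 - expm Z) <= @K0 R m * expR rho1 * (c1 * b ^+ 2).
  apply: le_trans (expm_lip hX1 hZ) _; apply: ler_wpM2l => //.
  exact: mulr_ge0 K00 (expR_ge0 _).
have hd2 : nm (expm Z' - expm Y1) <= @K0 R m * expR rho2 * (c2 * b ^+ 2).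
  apply: le_trans (expm_lip hZ' hY1) _; rewrite nmB; apply: ler_wpM2l => //.
  exact: mulr_ge0 K00 (expR_ge0 _).
have hP := nm_powB n.-1 hEX1 hEZ hd1.
rewrite prednK // -enn in hP.
have comAW : Am a P * W = W * Am a P by apply: A_ssp.
have eZn : expm Z ^+ n = expm Z'.
  rewrite -expm_nat.
  have e : n%:R *: Z = Z' + (n %/ k * k)%:R *: Am a P.
    rewrite /Z /Z' scalerDr {1}(divn_eq n k) natrD scalerDl.
    by rewrite [in RHS]addrC addrA.
  rewrite e expm_add; last first.
    by rewrite /Z'; apply: comm_lin; [by [] | by rewrite comAW].
  by rewrite expm_nat mulnC exprM hk expr1n mulr1.
have eY : Y = (r%:R : R[i]) *: Am a P + (r%:R : R[i]) *: sspc P B + (n%:R : R[i]) *: ssp P B by [].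
rewrite -eY.
clearbody Si X1 Y1 Y Z Z' S T W O.
have hG := pow_intertwine n (expm_intertwine H0).
have hH := expm_intertwine H0'.
move: hG hH eZn hP hd2.
move: (expm (Am a P + B)) (expm Y) (expm X1) (expm Z) (expm Z') (expm Y1).
move=> G H U V V' U' hG hH eV hP hd2.
have ediff : G ^+ n - H = S * ((U ^+ n - V ^+ n) + (V' - U')) * Si.
  rewrite eV addrA subrK mulrBr -hG -hH.
  by rewrite -mulrBl -mulrA hSSi mulr1.
rewrite ediff.
have hD : nm ((U ^+ n - V ^+ n) + (V' - U')) <= cD * b ^+ 2.
  apply: le_trans (nmD _ _) _; apply: le_trans (lerD hP hd2) _.
  by rewrite ecD le_eqVlt; apply/orP; left; apply/eqP; ring.
have hbf : b <= mm * frob B by rewrite eb emm; exact: nm_le_frob.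
have hbf2 : b ^+ 2 <= mm ^+ 2 * frob B ^+ 2.
  rewrite -exprMn; apply: lerXn2r => //; rewrite nnegrE //.
  by apply: mulr_ge0 => //; apply: le_trans (frob_ge0' B) _.
apply: le_trans (frob_le_nm _) _.
apply: le_trans (nmM _ _) _.
apply: le_trans (ler_pM (nm_ge0 _) (nm_ge0 _) (nmM _ _) (lexx _)) _.
apply: le_trans (ler_pM (mulr_ge0 (nm_ge0 _) (nm_ge0 _)) (nm_ge0 _)
   (ler_pM (nm_ge0 _) (nm_ge0 _) hS hD) hSi) _.
have e2 : s1 * (cD * b ^+ 2) * s2 = Cst * b ^+ 2.
  by rewrite eCst; ring.
rewrite e2.
apply: le_trans (ler_wpM2l Cst0 hbf2) _.
rewrite mulrA mulrDl mul1r lerDl.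
by rewrite exprn_ge0 // frob_ge0'.
Qed.
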